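(* Consider TOTATIVE. The nim-value of $n>1$ is the index of the smallest prime divisor of $n$, and $\mathcal{SG}(1)=0$.
   Context: TOTATIVE is the impartial normal-play game on the positive integers where from $n$ a player moves to a smaller relatively prime residue, i.e. to any $k$ with $1\le k<n$ and $\gcd(k,n)=1$; the player unable to move loses. $\mathcal{SG}$ (nim-value) denotes the Sprague-Grundy value (mex rule). Primes are indexed with $2$ having index $1$, $3$ index $2$, etc. *)

(* Defs.v *)
From mathcomp Require Import all_boot.
Set Implicit Arguments. Unset Strict Implicit. Unset Printing Implicit Defensive.

Definition mex (s : seq nat) : nat :=
  let fix go (fuel m : nat) := if fuel is f.+1 then (if m \in s then go f m.+1 else m) else m
  in go (size s).+1 0.

(* sg_table m = [:: SG 1; SG 2; ...; SG m] for TOTATIVE, built by the mex rule: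
   SG n = mex { SG k | 1 <= k < n, gcd k n = 1 }. *)
Fixpoint sg_table (m : nat) : seq nat :=
  if m is m'.+1 then
    let t := sg_table m' in
    rcons t (mex [seq nth 0 t k.-1 | k <- iota 1 m' & coprime k m])
  else [::].

Definition SG (n : nat) : nat := nth 0 (sg_table n) n.-1.

(* index of a prime p: 2 has index 1, 3 has index 2, ... *)
Definition prime_index (p : nat) : nat := count prime (iota 0 p.+1).

(* Main.v *)
Require Import Defs.
From mathcomp Require Import all_boot.
From mathcomp Require Import zify.

Fixpoint mgo (s : seq nat) (fuel m : nat) : nat :=
  if fuel is f.+1 then (if m \in s then mgo s f m.+1 else m) else m.

Lemma mex_aux s : forall f m,
  (fix go (fuel m : nat) : nat :=
     if fuel is f.+1 then (if m \in s then go f m.+1 else m) else m) f m = mgo s f m.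
Proof. by elim=> [|f IH] m //=; rewrite IH. Qed.

Lemma mexE s : mex s = mgo s (size s).+1 0.
Proof. exact: (mex_aux s (size s).+1 0). Qed.

Lemma mgo_spec s v : (forall i, i < v -> i \in s) -> v \notin s ->
  forall fuel m, m <= v -> v - m < fuel -> mgo s fuel m = v.
Proof.
move=> Hin Hv; elim=> [|f IH] m Hm Hf //=.
case: (ltnP m v) => Hmv.
  rewrite Hin //; apply: IH; lia.
have -> : m = v by lia.
by rewrite (negbTE Hv).
Qed.

Lemma mex_spec s v : (forall i, i < v -> i \in s) -> v \notin s -> mex s = v.
Proof.
move=> Hin Hv; rewrite mexE; apply: mgo_spec => //.
have : size (iota 0 v) <= size s.
  apply: uniq_leq_size; first exact: iota_uniq.
  by move=> i; rewrite mem_iota => /andP[_ Hi]; apply: Hin; lia.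
by rewrite size_iota subn0 ltnS.
Qed.

Lemma size_sg_table m : size (sg_table m) = m.
Proof. by elim: m => //= m IH; rewrite size_rcons IH. Qed.

Lemma sg_table_nth m k : k < m -> nth 0 (sg_table m) k = SG k.+1.
Proof.
rewrite /SG /=; elim: m => // m IH Hk.
rewrite [sg_table m.+1]/= nth_rcons size_sg_table.
case: (ltnP k m) => Hkm.
  by rewrite IH.
have -> : k = m by lia.
by rewrite eqxx nth_rcons size_sg_table ltnn eqxx.
Qed.

Lemma SG_rec n : 0 < n ->
  SG n = mex [seq SG k | k <- iota 1 n.-1 & coprime k n].
Proof.
case: n => // n _.
rewrite {1}/SG /= nth_rcons size_sg_table ltnn eqxx.
congr mex; apply/eq_in_map => k; rewrite mem_filter mem_iota => /andP[_ /andP[H1 H2]].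
rewrite sg_table_nth; last lia.
by rewrite prednK //.
Qed.

Lemma prime_indexS m : prime_index m.+1 = prime_index m + prime m.+1.
Proof.
by rewrite /prime_index -(addn1 m.+1) iotaD count_cat /= !add0n !addn0.
Qed.

Lemma prime_index_mono a b : a <= b -> prime_index a <= prime_index b.
Proof.
move=> /subnK <-; elim: (b - a) => // d IH.
rewrite addSn prime_indexS; lia.
Qed.

Lemma prime_index_lt q p : q < p -> prime p -> prime_index q < prime_index p.
Proof.
move=> Hqp Hp; case: p Hqp Hp => // p Hqp Hp.
rewrite prime_indexS Hp.
have := @prime_index_mono q p; lia.
Qed.

Lemma prime_index_inj p q : prime p -> prime q -> prime_index p = prime_index q -> p = q.
Proof.
move=> Hp Hq E; case: (ltngtP p q) => // H.
  by have := @prime_index_lt _ _ H Hq; lia.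
by have := @prime_index_lt _ _ H Hp; lia.
Qed.

Lemma prime_index_surj m j : 0 < j -> j <= prime_index m ->
  exists q, [/\ prime q, q <= m & prime_index q = j].
Proof.
elim: m => [|m IH] Hj Hjm; first by move: Hjm; rewrite /prime_index /=; lia.
move: Hjm; rewrite prime_indexS => Hjm.
case: (leqP j (prime_index m)) => H.
  by have [q [Hq Hqm E]] := IH Hj H; exists q; split => //; lia.
case Hp: (prime m.+1) Hjm => /= Hjm; last lia.
exists m.+1; split => //; rewrite prime_indexS Hp; lia.
Qed.

Lemma prime_index_gt0 p : prime p -> 0 < prime_index p.
Proof.
case: p => // p Hp; rewrite prime_indexS Hp; lia.
Qed.

Lemma SG1 : SG 1 = 0.
Proof. by []. Qed.

Theorem mainTheorem6 :
  SG 1 = 0 /\ (forall n : nat, 1 < n -> SG n = prime_index (pdiv n)).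
Proof.
split; first exact: SG1.
elim/ltn_ind => n IH Hn.
rewrite SG_rec; last lia.
have Pp := pdiv_prime Hn.
have Pd := pdiv_dvd n.
have Pl := pdiv_leq (ltnW Hn).
apply: mex_spec.
- move=> i Hi.
  apply/mapP.
  case: (posnP i) => Hi0.
    exists 1; last by rewrite Hi0.
    by rewrite mem_filter coprime1n mem_iota; apply/andP; split => //; lia.
  have Hile : i <= prime_index (pdiv n).-1.
    move: Hi; case E': (pdiv n) Pp => [|p] //= Pp'.
    rewrite prime_indexS Pp'; lia.
  have [q [Hq Hqm E]] := @prime_index_surj (pdiv n).-1 i Hi0 Hile.
  have Hqp : q < pdiv n.
    by have := prime_gt1 Pp; lia.
  exists q.
    rewrite mem_filter mem_iota prime_coprime //; apply/andP; split.
      apply/negP => Hqn.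
      by have := pdiv_min_dvd (prime_gt1 Hq) Hqn; lia.
    by have := prime_gt1 Hq; lia.
  by rewrite IH ?pdiv_id ?E //; [lia | exact: prime_gt1].
- apply/mapP => [[k]]; rewrite mem_filter mem_iota => /andP[Hc /andP[Hk1 Hk2]] E.
  case: (ltngtP k 1) => Hk; first lia.
    have Pk := pdiv_prime Hk.
    move: E; rewrite IH; [|lia|done] => E.
    have Eq := @prime_index_inj _ _ Pp Pk E.
    move: Hc; rewrite /coprime => /eqP Hg.
    have : pdiv n %| gcdn k n by rewrite dvdn_gcd Pd Eq pdiv_dvd.
    rewrite Hg dvdn1 => /eqP H1.
    by have := prime_gt1 Pp; lia.
  subst k; move: E; rewrite SG1 => E.
  by have := @prime_index_gt0 _ Pp; lia.
Qed.
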